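(* If a path $\omega\in\Omega$ is wCH-random for a computable temporal forecasting system $\varphi$, then $\min I_\textnormal{wCH}(\omega)\le\liminf_{n\to\infty}\overline{\varphi}(\omega_{1:n})$ and $\limsup_{n\to\infty}\underline{\varphi}(\omega_{1:n})\le\max I_\textnormal{wCH}(\omega)$.
   Context: $\mathcal{X}=\{0,1\}$; $\Omega=\mathcal{X}^{\mathbb{N}}$ (paths); $\mathbb{S}=\bigcup_{n\ge0}\mathcal X^n$ (situations), $|s|$ length, $\omega_{1:n}=(\omega_1,\dots,\omega_n)$, $\omega_{1:0}$ the empty string. $\mathcal{I}$: nonempty closed intervals $I\subseteq[0,1]$. A forecasting system is $\varphi:\mathbb S\to\mathcal I$, $\underline\varphi=\min\varphi$, $\overline\varphi=\max\varphi$; temporal if $\varphi(s)=\varphi(t)$ whenever $|s|=|t|$; an interval forecast $I$ is identified with the constant forecasting system $s\mapsto I$. $\varphi$ is computable if there are recursive $\underline q,\overline q:\mathbb S\times\mathbb N_0\to\mathbb Q$ with $|\underline\varphi(s)-\underline q(s,n)|<2^{-n}$ and $|\overline\varphi(s)-\overline q(s,n)|<2^{-n}$. A path $\omega$ is wCH-random for $\varphi$ if for every recursive temporal selection process $S:\mathbb S\to\{0,1\}$ (i.e. $S(s)$ depends only on $|s|$) with $\sum_{k=0}^{n-1}S(\omega_{1:k})\to\infty$: $\liminf_n \frac{\sum_{k<n}S(\omega_{1:k})[\omega_{k+1}-\underline\varphi(\omega_{1:k})]}{\sum_{k<n}S(\omega_{1:k})}\ge0$ and $\limsup_n \frac{\sum_{k<n}S(\omega_{1:k})[\omega_{k+1}-\overline\varphi(\omega_{1:k})]}{\sum_{k<n}S(\omega_{1:k})}\le0$.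 $\mathcal I_\textnormal{wCH}(\omega)=\{I\in\mathcal I:\omega\text{ wCH-random for }I\}$, $I_\textnormal{wCH}(\omega)=\bigcap_{I\in\mathcal I_\textnormal{wCH}(\omega)}I$. *)

(* Defs.v *)
From Stdlib Require Import Reals Lra List.
From Coquelicot Require Import Coquelicot.
Import ListNotations.
Open Scope R_scope.

Inductive rcode : Type :=
| RZero : rcode
| RSucc : rcode
| RProj : nat -> rcode
| RComp : rcode -> list rcode -> rcode
| RPrec : rcode -> rcode -> rcode
| RMu   : rcode -> rcode.

Inductive reval : rcode -> list nat -> nat -> Prop :=
| rev_zero xs : reval RZero xs 0
| rev_succ x xs : reval RSucc (x :: xs) (S x)
| rev_proj i xs : (i < length xs)%nat -> reval (RProj i) xs (nth i xs 0%nat)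
| rev_comp f gs xs ys z :
    Forall2 (fun g y => reval g xs y) gs ys ->
    reval f ys z -> reval (RComp f gs) xs z
| rev_prec0 f g xs y : reval f xs y -> reval (RPrec f g) (0%nat :: xs) y
| rev_precS f g n xs y z :
    reval (RPrec f g) (n :: xs) y -> reval g (n :: y :: xs) z ->
    reval (RPrec f g) (S n :: xs) z
| rev_mu f xs n :
    reval f (n :: xs) 0 ->
    (forall m, (m < n)%nat -> exists k, reval f (m :: xs) (S k)) ->
    reval (RMu f) xs n.

Definition recursive1 (f : nat -> nat) : Prop :=
  exists c, forall x, reval c [x] (f x).
Definition recursive2 (f : nat -> nat -> nat) : Prop :=
  exists c, forall x y, reval c [x; y] (f x y).

(* situations: finite binary strings; true = 1, false = 0 *)
Definition sit := list bool.

Fixpoint enc (s : sit) : nat :=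
  match s with
  | [] => 0%nat
  | b :: t => (2 * enc t + 1 + (if b then 1 else 0))%nat
  end.

Definition b2R (b : bool) : R := if b then 1 else 0.

(* paths omega = (omega_1, omega_2, ...) represented 0-based:
   omega_{k+1} is [w k]. *)
Definition path := nat -> bool.

Definition prefix (w : path) (n : nat) : sit := map w (seq 0 n).

Record interval := mkInterval {
  imin : R; imax : R;
  imin_ge0 : 0 <= imin; imin_le_imax : imin <= imax; imax_le1 : imax <= 1 }.

Definition in_interval (I : interval) (x : R) : Prop := imin I <= x <= imax I.

Definition forecasting_system := sit -> interval.
Definition lower (phi : forecasting_system) (s : sit) : R := imin (phi s).
Definition upper (phi : forecasting_system) (s : sit) : R := imax (phi s).

Definition temporal (phi : forecasting_system) : Prop :=
  forall s t : sit, length s = length t -> phi s = phi t.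

Definition const_fs (I : interval) : forecasting_system := fun _ => I.

Definition rat_of (a b d : nat) : R := (INR a - INR b) / (INR d + 1).

Definition computable_fs (phi : forecasting_system) : Prop :=
  exists a1 b1 d1 a2 b2 d2 : nat -> nat -> nat,
    recursive2 a1 /\ recursive2 b1 /\ recursive2 d1 /\
    recursive2 a2 /\ recursive2 b2 /\ recursive2 d2 /\
    forall (s : sit) (n : nat),
      Rabs (lower phi s - rat_of (a1 (enc s) n) (b1 (enc s) n) (d1 (enc s) n))
        < / 2 ^ n /\
      Rabs (upper phi s - rat_of (a2 (enc s) n) (b2 (enc s) n) (d2 (enc s) n))
        < / 2 ^ n.

Definition selection := sit -> bool.

Definition temporal_sel (S : selection) : Prop :=
  forall s t : sit, length s = length t -> S s = S t.

Definition recursive_sel (S : selection) : Prop :=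
  exists c, forall s, reval c [enc s] (if S s then 1%nat else 0%nat).

Fixpoint psum (f : nat -> R) (n : nat) : R :=
  match n with O => 0 | S m => psum f m + f m end.

Definition wCH_random (phi : forecasting_system) (w : path) : Prop :=
  forall S : selection,
    temporal_sel S -> recursive_sel S ->
    is_lim_seq (fun n => psum (fun k => b2R (S (prefix w k))) n) p_infty ->
    Rbar_le (Finite 0)
      (LimInf_seq (fun n =>
         psum (fun k => b2R (S (prefix w k)) * (b2R (w k) - lower phi (prefix w k))) n
         / psum (fun k => b2R (S (prefix w k))) n)) /\
    Rbar_le
      (LimSup_seq (fun n =>
         psum (fun k => b2R (S (prefix w k)) * (b2R (w k) - upper phi (prefix w k))) n
         / psum (fun k => b2R (S (prefix w k))) n)) (Finite 0).

Definition IwCH (w : path) : R -> Prop :=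
  fun x => forall I : interval, wCH_random (const_fs I) w -> in_interval I x.

Definition is_min_of (A : R -> Prop) (m : R) : Prop :=
  A m /\ forall x, A x -> m <= x.
Definition is_max_of (A : R -> Prop) (m : R) : Prop :=
  A m /\ forall x, A x -> x <= m.

(* Main.v *)
Require Import Defs.
From Stdlib Require Import Reals List Lra Lia Arith Classical.
From Coquelicot Require Import Coquelicot.
Import ListNotations.
Local Open Scope nat_scope.

Lemma reval_eq c xs v v' : reval c xs v -> v = v' -> reval c xs v'.
Proof. intros H <-; exact H. Qed.

Lemma rv_comp1 f g xs v z : reval g xs v -> reval f [v] z -> reval (RComp f [g]) xs z.
Proof. intros; eapply rev_comp; [apply Forall2_cons; [eassumption|apply Forall2_nil] | assumption]. Qed.
Lemma rv_comp2 f g1 g2 xs v1 v2 z : reval g1 xs v1 -> reval g2 xs v2 ->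
  reval f [v1; v2] z -> reval (RComp f [g1; g2]) xs z.
Proof. intros; eapply rev_comp;
  [apply Forall2_cons; [eassumption|apply Forall2_cons; [eassumption|apply Forall2_nil]] | assumption]. Qed.
Lemma rv_p0 x xs : reval (RProj 0) (x::xs) x.
Proof. exact (rev_proj 0 (x::xs) ltac:(simpl; lia)). Qed.
Lemma rv_p1 x y xs : reval (RProj 1) (x::y::xs) y.
Proof. exact (rev_proj 1 (x::y::xs) ltac:(simpl; lia)). Qed.
Lemma rv_p2 x y z xs : reval (RProj 2) (x::y::z::xs) z.
Proof. exact (rev_proj 2 (x::y::z::xs) ltac:(simpl; lia)). Qed.

Fixpoint prec (b : nat) (G : nat -> nat -> nat) (n : nat) : nat :=
  match n with O => b | S k => G k (prec b G k) end.
Lemma rv_prec f g xs b G : reval f xs b -> (forall k y, reval g (k::y::xs) (G k y)) ->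
  forall n, reval (RPrec f g) (n::xs) (prec b G n).
Proof. intros Hf Hg n; induction n; simpl. constructor; auto. eapply rev_precS; eauto. Qed.

Fixpoint cst (k : nat) : rcode := match k with O => RZero | S j => RComp RSucc [cst j] end.
Lemma rv_cst k xs : reval (cst k) xs k.
Proof. induction k; simpl. constructor. eapply rv_comp1; [eassumption| constructor]. Qed.

Definition P_add := RPrec (RProj 0) (RComp RSucc [RProj 1]).
Lemma rv_add n m : reval P_add [n; m] (n + m).
Proof.
  eapply reval_eq. apply (rv_prec _ _ [m] m (fun _ y => S y)).
  apply rv_p0. intros; eapply rv_comp1; [apply rv_p1| constructor].
  induction n; simpl; lia.
Qed.
Definition P_mul := RPrec RZero (RComp P_add [RProj 1; RProj 2]).
Lemma rv_mul n m : reval P_mul [n; m] (n * m).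
Proof.
  eapply reval_eq. apply (rv_prec _ _ [m] 0 (fun _ y => y + m)).
  constructor. intros; eapply rv_comp2; [apply rv_p1| apply rv_p2 | apply rv_add].
  induction n; simpl; lia.
Qed.
Definition P_pred := RPrec RZero (RProj 0).
Lemma rv_pred n : reval P_pred [n] (Nat.pred n).
Proof.
  eapply reval_eq. apply (rv_prec _ _ [] 0 (fun k _ => k)).
  constructor. intros; apply rv_p0.
  destruct n; reflexivity.
Qed.
Definition P_subr := RPrec (RProj 0) (RComp P_pred [RProj 1]).
Lemma rv_subr y x : reval P_subr [y; x] (x - y).
Proof.
  eapply reval_eq. apply (rv_prec _ _ [x] x (fun _ v => Nat.pred v)).
  apply rv_p0. intros; eapply rv_comp1; [apply rv_p1| apply rv_pred].
  induction y; simpl; lia.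
Qed.
Definition P_sg := RPrec RZero (RComp RSucc [RZero]).
Lemma rv_sg n : reval P_sg [n] (match n with O => 0 | S _ => 1 end).
Proof.
  eapply reval_eq. apply (rv_prec _ _ [] 0 (fun _ _ => 1)).
  constructor. intros; eapply rv_comp1; constructor.
  destruct n; reflexivity.
Qed.
Definition ltv x y := if Nat.ltb x y then 1 else 0.
Definition P_lt := RComp P_sg [P_subr].
Lemma rv_lt x y : reval P_lt [x; y] (ltv x y).
Proof.
  eapply rv_comp1. apply rv_subr. eapply reval_eq. apply rv_sg.
  unfold ltv. destruct (Nat.ltb_spec x y); destruct (y - x) eqn:E; lia.
Qed.

Definition stepF k c := c + (1 - ltv k (c + c)) * (S k - c).
Definition P_step := RComp P_add [RProj 1; RComp P_mul
   [RComp P_subr [RComp P_lt [RProj 0; RComp P_add [RProj 1; RProj 1]]; cst 1];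
    RComp P_subr [RProj 1; RComp RSucc [RProj 0]]]].
Lemma rv_step k c : reval P_step [k; c] (stepF k c).
Proof.
  unfold P_step, stepF. eapply rv_comp2. apply rv_p1.
  eapply rv_comp2. eapply rv_comp2. eapply rv_comp2. apply rv_p0.
  eapply rv_comp2; [apply rv_p1 | apply rv_p1 | apply rv_add]. apply rv_lt.
  apply rv_cst. apply rv_subr.
  eapply rv_comp2. apply rv_p1. eapply rv_comp1. apply rv_p0. constructor. apply rv_subr.
  apply rv_mul. apply rv_add.
Qed.
Definition canonF := prec 0 stepF.
Definition P_canon := RPrec RZero P_step.
Lemma rv_canon x : reval P_canon [x] (canonF x).
Proof. apply rv_prec. constructor. intros; apply rv_step. Qed.

Lemma canon_spec x : forall n, 2^n <= S x < 2^(S n) -> canonF x = 2^n - 1.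
Proof.
  induction x; intros n Hn.
  - destruct n. reflexivity. simpl in Hn. pose proof (Nat.pow_nonzero 2 n). lia.
  - change (canonF (S x)) with (stepF x (canonF x)). unfold stepF, ltv.
    destruct (Nat.eq_dec (2^n) (S (S x))) as [E|E].
    + destruct n. simpl in E. lia.
      rewrite (IHx n). 2:{ simpl in *. pose proof (Nat.pow_nonzero 2 n). lia. }
      rewrite Nat.pow_succ_r' in *.
      destruct (Nat.ltb_spec x (2^n - 1 + (2^n - 1)));
      rewrite ?Nat.sub_diag, ?Nat.sub_0_r, ?Nat.mul_0_l, ?Nat.mul_1_l; lia.
    + rewrite (IHx n). 2:{ simpl in *. lia. }
      rewrite Nat.pow_succ_r' in *. pose proof (Nat.pow_nonzero 2 n).
      destruct (Nat.ltb_spec x (2^n - 1 + (2^n - 1)));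
      rewrite ?Nat.sub_diag, ?Nat.sub_0_r, ?Nat.mul_0_l, ?Nat.mul_1_l; lia.
Qed.

Lemma enc_bounds s : 2^(length s) <= S (enc s) < 2^(S (length s)).
Proof. induction s as [|b t IH]; simpl in *. lia. destruct b; lia. Qed.

Lemma enc_zeros n : enc (repeat false n) = 2^n - 1.
Proof. induction n; simpl in *. reflexivity. pose proof (Nat.pow_nonzero 2 n). lia. Qed.

Lemma canon_enc s : canonF (enc s) = enc (repeat false (length s)).
Proof. rewrite enc_zeros. apply canon_spec, enc_bounds. Qed.

Definition rhsP B D N K p := RComp P_add [RComp P_mul [cst p; RComp RSucc [RComp D [P_canon; cst N]]];
   RComp P_mul [RComp B [P_canon; cst N]; cst K]].
Definition lhsP A N K := RComp P_mul [RComp A [P_canon; cst N]; cst K].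
Lemma rv_lhs A fa N K x : (forall x y, reval A [x;y] (fa x y)) ->
  reval (lhsP A N K) [x] (fa (canonF x) N * K).
Proof.
  intros HA. eapply rv_comp2. eapply rv_comp2. apply rv_canon. apply rv_cst. apply HA.
  apply rv_cst. apply rv_mul.
Qed.
Lemma rv_rhs B D fb fd N K p x : (forall x y, reval B [x;y] (fb x y)) -> (forall x y, reval D [x;y] (fd x y)) ->
  reval (rhsP B D N K p) [x] (p * S (fd (canonF x) N) + fb (canonF x) N * K).
Proof.
  intros HB HD. eapply rv_comp2. eapply rv_comp2. apply rv_cst.
  eapply rv_comp1. eapply rv_comp2. apply rv_canon. apply rv_cst. apply HD. constructor.
  apply rv_mul.
  eapply rv_comp2. eapply rv_comp2. apply rv_canon. apply rv_cst. apply HB. apply rv_cst. apply rv_mul.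
  apply rv_add.
Qed.

Local Open Scope R_scope.

Lemma div_lt_iff X D P K : 0 < D -> 0 < K -> (X / D < P / K <-> X * K < P * D).
Proof.
  intros HD HK.
  assert (E1 : X = X / D * D) by (field; lra).
  assert (E2 : P = P / K * K) by (field; lra).
  remember (X / D) as u. remember (P / K) as v. rewrite E1, E2.
  assert (DK : 0 < D * K) by nra.
  replace (u * D * K) with (u * (D * K)) by ring.
  replace (v * K * D) with (v * (D * K)) by ring.
  split; intro H. apply Rmult_lt_compat_r; auto. eapply Rmult_lt_reg_r; eauto.
Qed.

Lemma INR2pow N : INR (2 ^ N) = 2 ^ N.
Proof. rewrite pow_INR. simpl. f_equal. Qed.

Lemma pow2R_pos N : 0 < 2 ^ N.
Proof. apply pow_lt; lra. Qed.

Lemma rat_lt_iff1 a b d p K : (0 < K)%nat ->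
  (Nat.ltb (a*K) (p * S d + b*K) = true <-> rat_of a b d < INR p / INR K).
Proof.
  intros HK. rewrite Nat.ltb_lt. unfold rat_of.
  assert (HK' : 0 < INR K) by (apply lt_0_INR; lia).
  assert (HD : 0 < INR d + 1) by (pose proof (pos_INR d); lra).
  rewrite div_lt_iff by lra.
  split; intro H.
  - apply lt_INR in H. rewrite plus_INR, !mult_INR, S_INR in H. lra.
  - apply INR_lt. rewrite plus_INR, !mult_INR, S_INR. lra.
Qed.

Lemma rat_lt_iff2 a b d p K : (0 < K)%nat ->
  (Nat.ltb (p * S d + b*K) (a*K) = true <-> INR p / INR K < rat_of a b d).
Proof.
  intros HK. rewrite Nat.ltb_lt. unfold rat_of.
  assert (HK' : 0 < INR K) by (apply lt_0_INR; lia).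
  assert (HD : 0 < INR d + 1) by (pose proof (pos_INR d); lra).
  rewrite div_lt_iff by lra.
  split; intro H.
  - apply lt_INR in H. rewrite plus_INR, !mult_INR, S_INR in H. lra.
  - apply INR_lt. rewrite plus_INR, !mult_INR, S_INR. lra.
Qed.

Lemma temporal_rep phi s : temporal phi -> phi s = phi (repeat false (length s)).
Proof. intros Ht. apply Ht. rewrite repeat_length. reflexivity. Qed.

Lemma sel_upper phi : computable_fs phi -> temporal phi -> forall N p : nat,
 exists S, temporal_sel S /\ recursive_sel S /\ forall s,
   (S s = true -> upper phi s < INR p / 2^N + / 2^N) /\
   (upper phi s < INR p / 2^N - / 2^N -> S s = true).
Proof.
  intros Hc Ht N p.
  destruct Hc as (a1&b1&d1&a2&b2&d2&_&_&_&[A HA]&[B HB]&[D HD]&Happ).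
  set (K := (2^N)%nat).
  assert (HK : (0 < K)%nat) by (apply Nat.neq_0_lt_0, Nat.pow_nonzero; lia).
  exists (fun s => let e := enc (repeat false (length s)) in
     Nat.ltb (a2 e N * K) (p * S (d2 e N) + b2 e N * K)).
  split; [|split].
  - intros s t H. simpl. rewrite H. reflexivity.
  - exists (RComp P_lt [lhsP A N K; rhsP B D N K p]). intro s.
    eapply rv_comp2. apply rv_lhs with (fa := a2); exact HA.
    apply rv_rhs with (fb := b2) (fd := d2); assumption.
    eapply reval_eq. apply rv_lt. unfold ltv. rewrite canon_enc. reflexivity.
  - intro s. cbv zeta.
    set (t := repeat false (length s)).
    assert (Hu : upper phi s = upper phi t) by (unfold upper; rewrite (temporal_rep phi s Ht); reflexivity).
    destruct (Happ t N) as [_ Hr]. apply Rabs_def2 in Hr.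
    rewrite Hu. rewrite rat_lt_iff1 by exact HK. unfold K. rewrite INR2pow.
    unfold Rdiv in *. split; intro; lra.
Qed.

Lemma sel_lower phi : computable_fs phi -> temporal phi -> forall N p : nat,
 exists S, temporal_sel S /\ recursive_sel S /\ forall s,
   (S s = true -> INR p / 2^N - / 2^N < lower phi s) /\
   (INR p / 2^N + / 2^N < lower phi s -> S s = true).
Proof.
  intros Hc Ht N p.
  destruct Hc as (a1&b1&d1&a2&b2&d2&[A HA]&[B HB]&[D HD]&_&_&_&Happ).
  set (K := (2^N)%nat).
  assert (HK : (0 < K)%nat) by (apply Nat.neq_0_lt_0, Nat.pow_nonzero; lia).
  exists (fun s => let e := enc (repeat false (length s)) in
     Nat.ltb (p * S (d1 e N) + b1 e N * K) (a1 e N * K)).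
  split; [|split].
  - intros s t H. simpl. rewrite H. reflexivity.
  - exists (RComp P_lt [rhsP B D N K p; lhsP A N K]). intro s.
    eapply rv_comp2.
    apply rv_rhs with (fb := b1) (fd := d1); assumption.
    apply rv_lhs with (fa := a1); exact HA.
    eapply reval_eq. apply rv_lt. unfold ltv. rewrite canon_enc. reflexivity.
  - intro s. cbv zeta.
    set (t := repeat false (length s)).
    assert (Hu : lower phi s = lower phi t) by (unfold lower; rewrite (temporal_rep phi s Ht); reflexivity).
    destruct (Happ t N) as [Hr _]. apply Rabs_def2 in Hr.
    rewrite Hu. rewrite rat_lt_iff2 by exact HK. unfold K. rewrite INR2pow.
    unfold Rdiv in *. split; intro; lra.
Qed.

Local Open Scope R_scope.

Lemma psum_ext f g n : (forall k, f k = g k) -> psum f n = psum g n.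
Proof. intros H; induction n; simpl; [reflexivity| rewrite IHn, H; reflexivity]. Qed.
Lemma psum_minus f g n : psum (fun k => f k - g k) n = psum f n - psum g n.
Proof. induction n; simpl; [ring| rewrite IHn; ring]. Qed.
Lemma psum_scal f c n : psum (fun k => f k * c) n = psum f n * c.
Proof. induction n; simpl; [ring| rewrite IHn; ring]. Qed.
Lemma psum_le f g n : (forall k, f k <= g k) -> psum f n <= psum g n.
Proof. intros H; induction n; simpl; [lra| specialize (H n); lra]. Qed.
Lemma psum_nonneg f n : (forall k, 0 <= f k) -> 0 <= psum f n.
Proof. intros H; induction n; simpl; [lra| specialize (H n); lra]. Qed.
Lemma psum_mono f m n : (forall k, 0 <= f k) -> (m <= n)%nat -> psum f m <= psum f n.
Proof. intros H Hmn; induction Hmn; simpl; [lra| specialize (H m0); lra]. Qed.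

Lemma psum_inf (s : nat -> R) : (forall k, 0 <= s k) ->
  (forall N, exists n, (N <= n)%nat /\ 1 <= s n) -> is_lim_seq (psum s) p_infty.
Proof.
  intros H0 Hf. apply is_lim_seq_spec. intro M.
  assert (Hj : forall j : nat, exists N, INR j <= psum s N).
  { induction j. exists 0%nat. simpl; lra.
    destruct IHj as [N HN]. destruct (Hf N) as [n [Hn Hs]].
    exists (S n). rewrite S_INR. simpl. pose proof (psum_mono s N n H0 Hn). lra. }
  destruct (INR_unbounded M) as [j Hj'].
  destruct (Hj j) as [N HN]. exists N. intros n Hn.
  pose proof (psum_mono s N n H0 Hn). lra.
Qed.

Lemma L1 u : Rbar_le 0 (LimInf_seq u) -> forall eps, 0 < eps ->
  exists N, forall n, (N <= n)%nat -> -eps < u n.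
Proof.
  intros H eps He. destruct (ex_LimInf_seq u) as [l Hl].
  rewrite (is_LimInf_seq_unique _ _ Hl) in H. destruct l; simpl in H, Hl.
  - destruct (Hl (mkposreal eps He)) as [_ [N HN]]. exists N; intros n Hn.
    specialize (HN n Hn); simpl in HN; lra.
  - destruct (Hl (-eps)) as [N HN]. exists N; intros n Hn. specialize (HN n Hn); lra.
  - contradiction.
Qed.

Lemma L2 u : Rbar_le (LimSup_seq u) 0 -> forall eps, 0 < eps ->
  exists N, forall n, (N <= n)%nat -> u n < eps.
Proof.
  intros H eps He. destruct (ex_LimSup_seq u) as [l Hl].
  rewrite (is_LimSup_seq_unique _ _ Hl) in H. destruct l; simpl in H, Hl.
  - destruct (Hl (mkposreal eps He)) as [_ [N HN]]. exists N; intros n Hn.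
    specialize (HN n Hn); simpl in HN; lra.
  - contradiction.
  - destruct (Hl eps) as [N HN]. exists N; intros n Hn. specialize (HN n Hn); lra.
Qed.

Lemma L3 u m : ~ Rbar_le (Finite m) (LimInf_seq u) ->
  exists r, r < m /\ forall N, exists n, (N <= n)%nat /\ u n < r.
Proof.
  intros H. destruct (ex_LimInf_seq u) as [l Hl].
  rewrite (is_LimInf_seq_unique _ _ Hl) in H. destruct l; simpl in H, Hl.
  - assert (Hlt : r < m) by lra.
    assert (He : 0 < (m - r) / 2) by lra.
    exists (r + (m - r) / 2). split. lra.
    intro N. destruct (Hl (mkposreal _ He)) as [H1 _]. exact (H1 N).
  - exfalso; apply H; exact I.
  - exists (m - 1). split. lra. intro N. exact (Hl (m - 1) N).
Qed.

Lemma L4 u M : ~ Rbar_le (LimSup_seq u) (Finite M) ->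
  exists r, M < r /\ forall N, exists n, (N <= n)%nat /\ r < u n.
Proof.
  intros H. destruct (ex_LimSup_seq u) as [l Hl].
  rewrite (is_LimSup_seq_unique _ _ Hl) in H. destruct l; simpl in H, Hl.
  - assert (Hlt : M < r) by lra.
    assert (He : 0 < (r - M) / 2) by lra.
    exists (r - (r - M) / 2). split. lra.
    intro N. destruct (Hl (mkposreal _ He)) as [H1 _]. exact (H1 N).
  - exists (M + 1). split. lra. intro N. exact (Hl (M + 1) N).
  - exfalso; apply H; exact I.
Qed.

Lemma gen (s x a b : nat -> R) (al be : R) :
 (forall k, 0 <= s k) ->
 is_lim_seq (fun n => psum s n) p_infty ->
 (forall k, s k * al <= s k * a k) -> (forall k, s k * b k <= s k * be) ->
 Rbar_le 0 (LimInf_seq (fun n => psum (fun k => s k * (x k - a k)) n / psum s n)) ->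
 Rbar_le (LimSup_seq (fun n => psum (fun k => s k * (x k - b k)) n / psum s n)) 0 ->
 al <= be.
Proof.
  intros Hs Hlim Ha Hb H1 H2.
  destruct (Rle_or_lt al be) as [|Hlt]; auto. exfalso.
  assert (He : 0 < (al - be) / 2) by lra.
  destruct (L1 _ H1 _ He) as [N1 HN1].
  destruct (L2 _ H2 _ He) as [N2 HN2].
  apply is_lim_seq_spec in Hlim. destruct (Hlim 0) as [N3 HN3].
  set (n := (N1 + N2 + N3)%nat).
  specialize (HN1 n ltac:(unfold n; lia)). specialize (HN2 n ltac:(unfold n; lia)).
  specialize (HN3 n ltac:(unfold n; lia)). simpl in HN3.
  set (D := psum s n) in *.
  rewrite (psum_ext _ (fun k => s k * x k - s k * a k)) in HN1 by (intro; ring).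
  rewrite (psum_ext _ (fun k => s k * x k - s k * b k)) in HN2 by (intro; ring).
  rewrite psum_minus in HN1, HN2.
  assert (Ea : psum (fun k => s k * al) n <= psum (fun k => s k * a k) n) by (apply psum_le; auto).
  assert (Eb : psum (fun k => s k * b k) n <= psum (fun k => s k * be) n) by (apply psum_le; auto).
  rewrite psum_scal in Ea, Eb. fold D in Ea, Eb.
  set (X := psum (fun k => s k * x k) n) in *.
  set (A := psum (fun k => s k * a k) n) in *.
  set (B := psum (fun k => s k * b k) n) in *.
  assert (EA : X - A = (X - A) / D * D) by (field; lra).
  assert (EB : X - B = (X - B) / D * D) by (field; lra).
  remember ((X - A) / D) as qa. remember ((X - B) / D) as qb.
  nra.
Qed.

Local Open Scope R_scope.

Lemma b2R_01 b : 0 <= b2R b <= 1.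
Proof. destruct b; simpl; lra. Qed.

Lemma div_nonneg A D : 0 <= A -> 0 <= D -> 0 <= A / D.
Proof.
  intros HA HD. destruct (Req_dec D 0) as [->|Hn].
  unfold Rdiv; rewrite Rinv_0; lra.
  apply Rmult_le_pos; auto. apply Rlt_le, Rinv_0_lt_compat; lra.
Qed.

Lemma psum_zero n : psum (fun _ => 0) n = 0.
Proof. induction n; simpl; [reflexivity| rewrite IHn; ring]. Qed.

Definition I01 : interval := mkInterval 0 1 (Rle_refl 0) Rle_0_1 (Rle_refl 1).

Lemma I01_random w : wCH_random (const_fs I01) w.
Proof.
  intros S _ _ _. split.
  - rewrite <- (LimInf_seq_const 0). apply LimInf_le. exists 0%nat. intros n _.
    apply div_nonneg; apply psum_nonneg; intro k; unfold lower, const_fs; simpl;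
    pose proof (b2R_01 (S (prefix w k))); pose proof (b2R_01 (w k)); nra.
  - rewrite <- (LimSup_seq_const 0). apply LimSup_le. exists 0%nat. intros n _.
    set (A := psum _ n). set (D := psum _ n).
    assert (0 <= - A / D). apply div_nonneg.
    + assert (A <= psum (fun _ => 0) n).
      { unfold A. apply psum_le. intro k; unfold upper, const_fs; simpl.
        pose proof (b2R_01 (S (prefix w k))); pose proof (b2R_01 (w k)); nra. }
      rewrite psum_zero in H. lra.
    + unfold D; apply psum_nonneg; intro k; apply b2R_01.
    + unfold Rdiv in *. lra.
Qed.

Lemma true_sel : temporal_sel (fun _ => true) /\ recursive_sel (fun _ => true).
Proof.
  split. intros s t _; reflexivity.
  exists (RComp RSucc [RZero]). intro s. eapply rv_comp1; constructor.
Qed.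

Lemma true_lim w : is_lim_seq (fun n => psum (fun k => b2R ((fun _ : sit => true) (prefix w k))) n) p_infty.
Proof.
  apply psum_inf. intro; simpl; lra. intro N; exists N; split; [lia| simpl; lra].
Qed.

Lemma pair_random w I J : wCH_random (const_fs I) w -> wCH_random (const_fs J) w -> imin J <= imax I.
Proof.
  intros HI HJ. destruct true_sel as [Ht Hr].
  destruct (HJ _ Ht Hr (true_lim w)) as [H1 _].
  destruct (HI _ Ht Hr (true_lim w)) as [_ H2].
  apply (gen (fun k => b2R ((fun _ : sit => true) (prefix w k))) (fun k => b2R (w k))
     (fun k => lower (const_fs J) (prefix w k)) (fun k => upper (const_fs I) (prefix w k))).
  - intro; simpl; lra.
  - exact (true_lim w).
  - intro; unfold lower, const_fs; lra.
  - intro; unfold upper, const_fs; lra.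
  - exact H1.
  - exact H2.
Qed.

Lemma small_pow e : 0 < e -> exists N : nat, / 2 ^ N < e.
Proof.
  intros He. destruct (INR_unbounded (/ e)) as [j Hj].
  assert (Hp : forall n, INR n < 2 ^ n).
  { induction n. simpl; lra. rewrite S_INR. simpl. pose proof (pow_le 2 n ltac:(lra)).
    assert (1 <= 2 ^ n) by (apply pow_R1_Rle; lra). lra. }
  exists j. specialize (Hp j).
  assert (0 < / e) by (apply Rinv_0_lt_compat; lra).
  pose proof (pow2R_pos j). rewrite <- (Rinv_inv e). apply Rinv_lt_contravar. apply Rmult_lt_0_compat; lra. lra.
Qed.

Lemma floorN_ex x N : 0 <= x -> exists p : nat, INR p / 2 ^ N <= x < INR p / 2 ^ N + / 2 ^ N.
Proof.
  intros Hx. pose proof (pow2R_pos N) as HK.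
  assert (H0 : 0 <= x * 2 ^ N) by (apply Rmult_le_pos; lra). destruct (nfloor_ex (x * 2 ^ N) H0) as [p Hp].
  exists p. set (K := 2 ^ N) in *. split.
  - apply (Rmult_le_reg_r K); [lra|]. replace (INR p / K * K) with (INR p) by (field; lra). lra.
  - apply (Rmult_lt_reg_r K); [lra|]. replace ((INR p / K + / K) * K) with (INR p + 1) by (field; lra). lra.
Qed.

Open Scope R_scope.

Lemma interval_facts I : 0 <= imin I /\ imin I <= imax I /\ imax I <= 1.
Proof. destruct I; simpl; auto. Qed.

Theorem proposition15 (phi : forecasting_system) (w : path) :
  computable_fs phi -> temporal phi -> wCH_random phi w ->
  (exists m, is_min_of (IwCH w) m /\
     Rbar_le (Finite m) (LimInf_seq (fun n => upper phi (prefix w n)))) /\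
  (exists M, is_max_of (IwCH w) M /\
     Rbar_le (LimSup_seq (fun n => lower phi (prefix w n))) (Finite M)).
Proof.
  intros Hc Ht Hrand.
  set (Rnd := fun I => wCH_random (const_fs I) w).
  split.
  - set (E := fun x => exists I, Rnd I /\ x = imin I).
    assert (Hb : bound E).
    { exists 1. intros x [I [_ ->]]. pose proof (interval_facts I). lra. }
    assert (Hne : exists x, E x) by (exists (imin I01); exists I01; split; [apply I01_random|reflexivity]).
    destruct (completeness E Hb Hne) as [m [Hub Hlub]].
    exists m. split.
    + split.
      * intros I HI. split. apply Hub. exists I; auto.
        apply Hlub. intros x [J [HJ ->]]. apply (pair_random w I J); auto.
      * intros x Hx. apply Hlub. intros y [J [HJ ->]]. apply (Hx J HJ).
    + destruct (Rbar_le_dec m (LimInf_seq (fun n => upper phi (prefix w n)))) as [|Hn]; auto.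
      exfalso.
      destruct (L3 _ _ Hn) as [r [Hrm Hfr]].
      assert (Hr0 : 0 <= r).
      { destruct (Hfr 0%nat) as [n [_ Hn']]. pose proof (interval_facts (phi (prefix w n))).
        unfold upper in Hn'. lra. }
      assert (HI : exists I, Rnd I /\ r < imin I).
      { apply NNPP. intro Hno.
        assert (m <= r).
        { apply Hlub. intros x [J [HJ ->]]. apply Rnot_lt_le. intro Hlt. apply Hno. exists J; auto. }
        lra. }
      destruct HI as [I [HI Hrl]].
      set (g := imin I - r).
      destruct (small_pow (g / 4) ltac:(unfold g; lra)) as [N HN].
      destruct (floorN_ex (r + g / 2) N ltac:(unfold g; lra)) as [p Hp].
      destruct (sel_upper phi Hc Ht N p) as [S [HSt [HSr HS]]].
      set (c := INR p / 2 ^ N) in *. set (dl := / 2 ^ N) in *.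
      assert (Hlim : is_lim_seq (fun n => psum (fun k => b2R (S (prefix w k))) n) p_infty).
      { apply psum_inf. intro; apply b2R_01.
        intro N0. destruct (Hfr N0) as [n [Hn0 Hu]]. exists n. split; auto.
        destruct (HS (prefix w n)) as [_ H2]. rewrite H2. simpl; lra. lra. }
      destruct (Hrand S HSt HSr Hlim) as [_ H2].
      destruct (HI S HSt HSr Hlim) as [H1 _].
      assert (imin I <= c + dl).
      { apply (gen (fun k => b2R (S (prefix w k))) (fun k => b2R (w k))
          (fun k => lower (const_fs I) (prefix w k)) (fun k => upper phi (prefix w k))).
        - intro; apply b2R_01.
        - exact Hlim.
        - intro; unfold lower, const_fs; lra.
        - intro k. destruct (S (prefix w k)) eqn:ES; simpl.
          destruct (HS (prefix w k)) as [Hs1 _]. specialize (Hs1 ES). lra. lra.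
        - exact H1.
        - exact H2. }
      unfold g in *. lra.
  - set (E := fun x => exists I, Rnd I /\ x = - imax I).
    assert (Hb : bound E).
    { exists 0. intros x [I [_ ->]]. pose proof (interval_facts I). lra. }
    assert (Hne : exists x, E x) by (exists (- imax I01); exists I01; split; [apply I01_random|reflexivity]).
    destruct (completeness E Hb Hne) as [m [Hub Hlub]].
    exists (- m). split.
    + split.
      * intros I HI. split.
        -- cut (m <= - imin I). lra.
           apply Hlub. intros x [J [HJ ->]]. pose proof (pair_random w J I HJ HI). lra.
        -- cut (- imax I <= m). lra. apply Hub. exists I; auto.
      * intros x Hx. cut (m <= - x). lra. apply Hlub. intros y [J [HJ ->]].
        pose proof (proj2 (Hx J HJ)). lra.
    + destruct (Rbar_le_dec (LimSup_seq (fun n => lower phi (prefix w n))) (- m)) as [|Hn]; auto.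
      exfalso.
      destruct (L4 _ _ Hn) as [r [Hrm Hfr]].
      assert (HI : exists I, Rnd I /\ imax I < r).
      { apply NNPP. intro Hno.
        assert (m <= - r).
        { apply Hlub. intros x [J [HJ ->]]. cut (r <= imax J). lra.
          apply Rnot_lt_le. intro Hlt. apply Hno. exists J; auto. }
        lra. }
      destruct HI as [I [HI Hrl]].
      pose proof (interval_facts I).
      set (g := r - imax I).
      destruct (small_pow (g / 4) ltac:(unfold g; lra)) as [N HN].
      destruct (floorN_ex (r - g / 4) N ltac:(unfold g; lra)) as [p Hp].
      destruct (sel_lower phi Hc Ht N p) as [S [HSt [HSr HS]]].
      set (c := INR p / 2 ^ N) in *. set (dl := / 2 ^ N) in *.
      assert (Hlim : is_lim_seq (fun n => psum (fun k => b2R (S (prefix w k))) n) p_infty).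
      { apply psum_inf. intro; apply b2R_01.
        intro N0. destruct (Hfr N0) as [n [Hn0 Hu]]. exists n. split; auto.
        destruct (HS (prefix w n)) as [_ H2]. rewrite H2. simpl; lra. unfold g in *. lra. }
      destruct (Hrand S HSt HSr Hlim) as [H1 _].
      destruct (HI S HSt HSr Hlim) as [_ H2].
      assert (c - dl <= imax I).
      { apply (gen (fun k => b2R (S (prefix w k))) (fun k => b2R (w k))
          (fun k => lower phi (prefix w k)) (fun k => upper (const_fs I) (prefix w k))).
        - intro; apply b2R_01.
        - exact Hlim.
        - intro k. destruct (S (prefix w k)) eqn:ES; simpl.
          destruct (HS (prefix w k)) as [Hs1 _]. specialize (Hs1 ES). lra. lra.
        - intro; unfold upper, const_fs; lra.
        - exact H1.
        - exact H2. }
      unfold g in *. lra.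
Qed.
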